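(* For every feasible basis $B$ of a system $Ax=b$, $x\in\mathbb{R}^d_{\geq 0}$ that satisfies the dominance condition, the submatrix $\hat A_B$ (columns of the normalized matrix $\hat A$ indexed by $B$) covers a permutation matrix.
   Context: $A\in\mathbb{R}^{n\times d}_{\geq 0}$ has a nonzero entry in each column and $b>0$. A feasible basis is $B\subset[d]$ with $A_B$ square nonsingular and the unique solution of $Ax=b$ supported in $B$ nonnegative. The normalized matrix is $\hat A=(\operatorname{diag} b)^{-1}A(\operatorname{diag} u)^{-1}$, where $u_j$ is the largest entry of the $j$th column of $(\operatorname{diag} b)^{-1}A$; it has entries in $[0,1]$ and a $1$-entry in each column. A matrix covers another if their difference is entrywise nonnegative. The system satisfies the dominance condition if $\hat A$ satisfies (a) some $n\times n$ submatrix covers a permutation matrix, and (b) every $n\times n$ submatrix covering a permutation matrix has all row sums less than $2$. *)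

(* Defs.v *)
From mathcomp Require Import all_boot all_order all_algebra all_fingroup.
Set Implicit Arguments. Unset Strict Implicit. Unset Printing Implicit Defensive.
Import Order.TTheory GRing.Theory Num.Theory.
Local Open Scope ring_scope.

Section Defs.
Variable R : realFieldType.

Definition colmax n d (A : 'M[R]_(n, d)) (b : 'cV[R]_n) (j : 'I_d) : R :=
  \big[Num.max/0]_(i < n) (A i j / b i 0).

Definition normalized n d (A : 'M[R]_(n, d)) (b : 'cV[R]_n) : 'M[R]_(n, d) :=
  \matrix_(i, j) (A i j / (b i 0 * colmax A b j)).

Definition covers m n (M N : 'M[R]_(m, n)) : Prop :=
  forall i j, 0 <= M i j - N i j.

Definition covers_perm n (M : 'M[R]_n) : Prop :=
  exists s : 'S_n, covers M (perm_mx s).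

(* A column selection B subset [d] with |B| = n is given by an injective
   f : 'I_n -> 'I_d (ordering of B is immaterial); A_B = colsub f A. *)
Definition feasible_basis n d (A : 'M[R]_(n, d)) (b : 'cV[R]_n)
  (f : 'I_n -> 'I_d) : Prop :=
  injective f /\ colsub f A \in unitmx /\
  (forall k, 0 <= (invmx (colsub f A) *m b) k 0).

Definition dominance n d (A : 'M[R]_(n, d)) (b : 'cV[R]_n) : Prop :=
  let Ah := normalized A b in
  (exists f : 'I_n -> 'I_d, injective f /\ covers_perm (colsub f Ah)) /\
  (forall f : 'I_n -> 'I_d, injective f -> covers_perm (colsub f Ah) ->
     forall i, \sum_(j < n) colsub f Ah i j < 2).

End Defs.

(* Main.v *)
Require Import Defs.
From mathcomp Require Import all_boot all_order all_algebra all_fingroup.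
From mathcomp Require Import ring lra.
Import Order.TTheory GRing.Theory Num.Theory.
Local Open Scope ring_scope.

Lemma perm_mxE' (R : realFieldType) n (s : 'S_n) i j :
  (perm_mx s : 'M[R]_n) i j = (s i == j)%:R.
Proof. by rewrite /perm_mx /row_perm !mxE. Qed.

Lemma surj_inj (T : finType) (r : T -> T) :
  (forall y, exists x, r x = y) -> injective r.
Proof.
move=> H.
have [g Hg] : exists g : T -> T, cancel g r.
  have H' : forall y, y \in codom r.
    by move=> y; case: (H y) => x <-; apply: codom_f.
  by exists (fun y => iinv (H' y)) => y; rewrite f_iinv.
have ginj : injective g := can_inj Hg.
have Hc : cancel r g.
  move=> x; have /codomP [y ->] := injF_onto ginj x.
  by rewrite Hg.
exact: can_inj Hc.
Qed.

Theorem lemma4p8 (R : realFieldType) (n d : nat) (A : 'M[R]_(n, d)) (b : 'cV[R]_n) :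
  (forall i j, 0 <= A i j) ->
  (forall j, exists i, A i j != 0) ->
  (forall i, 0 < b i 0) ->
  dominance A b ->
  forall f : 'I_n -> 'I_d, feasible_basis A b f ->
  covers_perm (colsub f (normalized A b)).
Proof.
move=> A0 Anz b0 [[g [ginj [s covg]]] domb] f [finj [unit xge0]].
set Ah := normalized A b in domb covg *.
have cE : forall (g : 'I_n -> 'I_d) i j, colsub g Ah i j = Ah i (g j) by move=> *; rewrite mxE.
have upos : forall j, 0 < colmax A b j.
  move=> j; case: (Anz j) => i Hi.
  have Hp : 0 < A i j / b i 0.
    by apply: divr_gt0 => //; rewrite lt0r Hi A0.
  apply: (lt_le_trans Hp).
  exact: (le_bigmax 0 (fun i => A i j / b i 0) i).
have AhE : forall i j, Ah i j = A i j / (b i 0 * colmax A b j).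
  by move=> i j; rewrite /Ah /normalized mxE.
have Ah0 : forall i j, 0 <= Ah i j.
  move=> i j; rewrite AhE; apply: divr_ge0 => //.
  by apply: mulr_ge0; apply: ltW.
have Ah1 : forall j, exists i, 1 <= Ah i j.
  move=> j; case: (boolP [exists i, 1 <= Ah i j]) => [/existsP [i Hi] | /existsPn H]; first by exists i.
  have : colmax A b j < colmax A b j.
    rewrite {1}/colmax; apply: bigmax_lt => // i _.
    have := H i; rewrite -ltNge AhE.
    have bi := b0 i; have uj := upos j.
    rewrite ltr_pdivrMr ?mulr_gt0 // mul1r.
    by move=> Hl; rewrite ltr_pdivrMr // mulrC.
  by move=> Hc; exfalso; move: Hc; rewrite lt_irreflexive.
pose x := invmx (colsub f A) *m b.
have Hx : colsub f A *m x = b by rewrite /x mulKVmx.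
pose y k := colmax A b (f k) * x k 0.
have y0 : forall k, 0 <= y k.
  by move=> k; apply: mulr_ge0; [exact: ltW | exact: xge0].
have yeq : forall h, \sum_k Ah h (f k) * y k = 1.
  move=> h.
  have -> : \sum_k Ah h (f k) * y k = (\sum_k A h (f k) * x k 0) / b h 0.
    rewrite mulr_suml; apply: eq_bigr => k _; rewrite AhE /y.
    have bh := lt0r_neq0 (b0 h); have uk := lt0r_neq0 (upos (f k)).
    by field; rewrite bh uk.
  have : (colsub f A *m x) h 0 = b h 0 by rewrite Hx.
  rewrite mxE; under eq_bigr do rewrite mxE; move=> ->.
  by rewrite divff // lt0r_neq0.
have cg : forall i, 1 <= Ah i (g (s i)).
  by move=> i; have := covg i (s i); rewrite perm_mxE' eqxx mxE subr_ge0.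
have gsum := domb g ginj (ex_intro _ s covg).
have guniq : forall h i, 1 <= Ah h (g (s i)) -> h = i.
  move=> h i H; apply/eqP; apply/negPn/negP => hi.
  have := gsum h.
  rewrite (bigD1 (s h)) //= (bigD1 (s i)) /=; last by rewrite (inj_eq perm_inj) eq_sym.
  rewrite !cE.
  set S := \sum_(j | _) _.
  have S0 : 0 <= S by apply: sumr_ge0 => j _; rewrite cE.
  move=> Hs; have := cg h; move=> Hc; clear -Hs Hc H S0; lra.
pose r k := odflt k [pick i | 1 <= Ah i (f k)].
have rP : forall k, 1 <= Ah (r k) (f k).
  move=> k; rewrite /r; case: pickP => [i //|H].
  by case: (Ah1 (f k)) => i Hi; rewrite H in Hi.
case: (boolP [forall i, exists k, r k == i]) => [/forallP Hs | /forallPn [i0 /existsPn Hi0]].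
  have rinj : injective r.
    by apply: surj_inj => i; case/existsP: (Hs i) => k /eqP <-; exists k.
  exists ((perm rinj)^-1)%g => i j.
  rewrite perm_mxE' mxE; case: eqP => [<- | _]; last by rewrite subr0.
  have e : r (((perm rinj)^-1)%g i) = i by rewrite -(permE rinj) permKV.
  by have := rP (((perm rinj)^-1)%g i); rewrite e subr_ge0.
exfalso.
pose F k := Ah i0 (f k).
pose rep h := [pick k | (r k == h) && [forall k', (r k' == h) ==> (F k' <= F k)]].
have repP : forall h k1, rep h = Some k1 -> r k1 = h /\ forall k', r k' = h -> F k' <= F k1.
  move=> h k1; rewrite /rep; case: pickP => // k2 /andP [/eqP e /forallP H] [<-].
  split; first exact: e.
  move=> k' e'; have := H k'; rewrite e' eqxx.
  by [].
have repN : forall k, rep (r k) != None.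
  move=> k; rewrite /rep; case: pickP => // H.
  have Pk : (fun k' => r k' == r k) k by rewrite /= eqxx.
  case: (@arg_maxP _ _ _ k (fun k' => r k' == r k) F Pk) => k1 Pk1 Hk1.
  have := H k1; rewrite Pk1 /=; move/negbT/negP => Hn; exfalso; apply: Hn.
  by apply/forallP => k'; apply/implyP => /Hk1.
pose g2 h := if rep h is Some k then f k else g (s h).
have g2inj : injective g2.
  move=> h1 h2; rewrite /g2.
  case E1: (rep h1) => [k1|]; case E2: (rep h2) => [k2|].
  - move/finj => e; subst k2.
    have [e1 _] := repP _ _ E1; have [e2 _] := repP _ _ E2; by rewrite -e1 -e2.
  - move=> e; have [e1 _] := repP _ _ E1.
    have := rP k1; rewrite e => /guniq e'.
    by have := repN k1; rewrite e' E2.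
  - move=> e; have [e2 _] := repP _ _ E2.
    have := rP k2; rewrite -e => /guniq e'.
    by have := repN k2; rewrite e' E1.
  - by move/ginj/perm_inj.
have g2cov : covers_perm (colsub g2 Ah).
  exists 1%g => i j; rewrite perm_mxE' perm1 cE; case: eqP => [<-|_]; last by rewrite subr0.
  rewrite subr_ge0 /g2; case E: (rep i) => [k|]; last exact: cg.
  by have [<- _] := repP _ _ E; exact: rP.
have S2 := domb g2 g2inj g2cov i0.
pose M h := if rep h is Some k then F k else 0.
have M0 : forall h, 0 <= M h by move=> h; rewrite /M; case: (rep h) => [k|] //; exact: Ah0.
have repi0 : rep i0 = None.
  case E: rep => [k|] //; have [e _] := repP _ _ E; by have := Hi0 k; rewrite e eqxx.
have Msum : \sum_h M h < 1.
  rewrite (bigD1 i0) //= cE in S2; rewrite (bigD1 i0) //=; move: S2.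
  have -> : M i0 = 0 by rewrite /M repi0.
  have -> : g2 i0 = g (s i0) by rewrite /g2 repi0.
  have : \sum_(h | h != i0) M h <= \sum_(h | h != i0) colsub g2 Ah i0 h.
    apply: ler_sum => h _; rewrite cE /M /g2; case: (rep h) => [k|] //; exact: Ah0.
  have := cg i0.
  move: (\sum_(h | h != i0) M h) (\sum_(h | h != i0) colsub g2 Ah i0 h) (Ah i0 (g (s i0))).
  clear; move=> a b c; lra.
have Y1 : forall h, \sum_(k | r k == h) y k <= 1.
  move=> h; rewrite -(yeq h) (bigID (fun k => r k == h) predT) /=.
  apply: le_trans (_ : _ <= \sum_(k | r k == h) Ah h (f k) * y k) _.
    by apply: ler_sum => k /eqP e; rewrite ler_peMl // -e; exact: rP.
  by rewrite lerDl sumr_ge0 // => k _; rewrite mulr_ge0.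
have : 1 <= \sum_h M h.
  rewrite -(yeq i0).
  apply: le_trans (_ : _ <= \sum_k M (r k) * y k) _.
    apply: ler_sum => k _; apply: ler_wpM2r => //.
    rewrite /M; case E: (rep (r k)) => [k1|]; last by move: (repN k); rewrite E.
    by have [_ H] := repP _ _ E; exact: H.
  rewrite (partition_big r predT) //=.
  apply: ler_sum => h _.
  have -> : \sum_(k | true && (r k == h)) M (r k) * y k = M h * \sum_(k | r k == h) y k.
    by rewrite mulr_sumr; apply: eq_big => k //= /eqP ->.
  exact: ler_piMr.
move: Msum; move: (\sum_h M h); clear; move=> a; lra.
Qed.
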